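(* Let $G$ be a graph with an odd number $n$ of vertices and stubbornness levels $\alpha_x\in(0,1)$. Let $\mathcal{S}=(S,\overline{S})$ be a good bisection of $G$ and let $u$ be a good vertex of $\mathcal{S}$. Then $G$ admits a subvertable belief assignment $\mathbf{b}$ such that $u$ is a swing vertex for $\mathbf{b}$.
   Context: $G$ is a finite simple undirected graph, $N(x)$ the neighbors of $x$. For vertex sets $A,B$, $W(A,B)$ is the number of edges with one endpoint in $A$ and the other in $B$ (singletons written without braces). $a_x=\lfloor\alpha_x/(1-\alpha_x)\rfloor$. A bisection $\mathcal{S}=(S,\overline{S})$ is a partition of the vertex set with $|S|=\frac{n+1}{2}$, $|\overline{S}|=\frac{n-1}{2}$. The deficiency is $\mathrm{def}_{\mathcal{S}}(x)=W(x,S)-W(x,\overline{S})$ if $x\in S$ and $W(x,\overline{S})-W(x,S)$ if $x\in\overline{S}$. $\mathcal{S}$ is good if (1) $\mathrm{def}_{\mathcal{S}}(x)\ge -a_x$ for all $x\in S$, and (2) some $u\in S$ has $\mathrm{def}_{\mathcal{S}}(u)\ge a_u+1$; such vertices $u$ are the good vertices of $\mathcal{S}$. Game: belief assignment $\mathbf{b}\in\{0,1\}^n$, state $\mathbf{s}\in\{0,1\}^n$, cost $c_i(\mathbf{s})=\alpha_i|\mathbf{s}(i)-\mathbf{b}(i)|+(1-\alpha_i)\sum_{j\in N(i)}|\mathbf{s}(i)-\mathbf{s}(j)|$; truthful state $\mathbf{s}=\mathbf{b}$; a best response move changes one player's opinion to the other value when this strictly lowers its cost; an equilibrium is a state where no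 single player can strictly lower its cost by switching. $(\mathbf{s}_{-i},a)$ denotes $\mathbf{s}$ with coordinate $i$ replaced by $a$. $\mathbf{b}$ is subvertable if a majority of vertices have belief $0$ and some sequence of best response moves from the truthful state reaches an equilibrium with a majority of opinion $1$. For a subvertable $\mathbf{b}$ with exactly $\frac{n+1}{2}$ vertices of belief $0$, a vertex $u$ is a swing vertex if: $\mathbf{b}(u)=0$; $c_u(\mathbf{b})>c_u(\mathbf{b}')$ with $\mathbf{b}'=(\mathbf{b}_{-u},1)$; and for every $x$ with $\mathbf{b}(x)=1$, $c_x(\mathbf{b}')\le c_x((\mathbf{b}'_{-x},0))$. *)

(* Defs.v *)
From HB Require Import structures.
From mathcomp Require Import all_boot all_order all_algebra.
From mathcomp Require Import reals.
Set Implicit Arguments. Unset Strict Implicit. Unset Printing Implicit Defensive.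
Import Order.TTheory GRing.Theory Num.Theory.
Local Open Scope ring_scope.

Section Defs.
Variables (R : realType) (T : finType).

Definition simple_graph (e : rel T) : Prop :=
  symmetric e /\ irreflexive e.

Definition nbhd (e : rel T) (x : T) : {set T} := [set y | e x y].

Definition W (e : rel T) (x : T) (A : {set T}) : nat := #|nbhd e x :&: A|.

Definition a_of (alpha : T -> R) (x : T) : int :=
  Num.floor (alpha x / (1 - alpha x)).

Definition deficiency (e : rel T) (S : {set T}) (x : T) : int :=
  if x \in S then (W e x S)%:Z - (W e x (~: S))%:Z
  else (W e x (~: S))%:Z - (W e x S)%:Z.

Definition bisection (S : {set T}) : Prop := (#|S|.*2 = #|T|.+1)%N.

Definition good_vertex (e : rel T) (alpha : T -> R) (S : {set T}) (u : T) :=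
  (u \in S) /\ deficiency e S u >= a_of alpha u + 1.

Definition good_bisection (e : rel T) (alpha : T -> R) (S : {set T}) : Prop :=
  bisection S /\
  (forall x, x \in S -> deficiency e S x >= - a_of alpha x) /\
  (exists u, good_vertex e alpha S u).

(* Opinions / beliefs: false = 0, true = 1. *)
Definition state := {ffun T -> bool}.

Definition bdist (p q : bool) : R := if p == q then 0 else 1.

Definition cost (e : rel T) (alpha : T -> R) (b s : state) (i : T) : R :=
  alpha i * bdist (s i) (b i)
  + (1 - alpha i) * \sum_(j in nbhd e i) bdist (s i) (s j).

Definition upd (s : state) (i : T) (a : bool) : state :=
  [ffun j => if j == i then a else s j].

Definition br_move (e : rel T) (alpha : T -> R) (b s s' : state) : Prop :=
  exists i, s' = upd s i (~~ s i) /\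
            cost e alpha b s' i < cost e alpha b s i.

Inductive br_reach (e : rel T) (alpha : T -> R) (b : state) : state -> state -> Prop :=
| br_refl s : br_reach e alpha b s s
| br_step s s' s'' : br_move e alpha b s s' -> br_reach e alpha b s' s'' ->
                     br_reach e alpha b s s''.

Definition equilibrium (e : rel T) (alpha : T -> R) (b s : state) : Prop :=
  forall i, ~ (cost e alpha b (upd s i (~~ s i)) i < cost e alpha b s i).

Definition majority (s : state) (v : bool) : Prop :=
  (#|T| < (#|[set x | s x == v]|).*2)%N.

Definition subvertable (e : rel T) (alpha : T -> R) (b : state) : Prop :=
  majority b false /\
  exists s, br_reach e alpha b b s /\ equilibrium e alpha b s /\ majority s true.

Definition swing_vertex (e : rel T) (alpha : T -> R) (b : state) (u : T) : Prop :=
  subvertable e alpha b /\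
  ((#|[set x | b x == false]|).*2 = #|T|.+1)%N /\
  b u = false /\
  cost e alpha b (upd b u true) u < cost e alpha b b u /\
  (forall x, b x = true ->
     cost e alpha b (upd b u true) x <= cost e alpha b (upd (upd b u true) x false) x).

End Defs.

(* Main.v *)
Require Import Defs.
From HB Require Import structures.
From mathcomp Require Import all_boot all_order all_algebra.
From mathcomp Require Import reals.
From mathcomp Require Import lra zify.
Import Order.TTheory GRing.Theory Num.Theory.
Local Open Scope ring_scope.

Section Gen.
Variables (R : realType) (T : finType) (e : rel T) (alpha : T -> R) (b : state T).
Hypothesis irr : irreflexive e.
Hypothesis alpha01 : forall x, 0 < alpha x < 1.

Lemma sum_bdist (s : state T) x (a : bool) :
  \sum_(j in nbhd e x) bdist R a (s j) = #|[set j in nbhd e x | s j != a]|%:R.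
Proof.
rewrite (bigID (fun j => s j != a)) /= [X in _ + X]big1; last first.
  by move=> j /andP[_]; rewrite negbK /bdist => /eqP ->; rewrite eqxx.
rewrite addr0 (eq_bigr (fun _ => 1)); last first.
  by move=> j /andP[_ h]; rewrite /bdist eq_sym (negbTE h).
rewrite sumr_const; congr (_ *+ _); apply: eq_card => j.
by rewrite [RHS]inE.
Qed.

Lemma cost_E (s : state T) x : cost e alpha b s x =
  alpha x * bdist R (s x) (b x) + (1 - alpha x) * #|[set j in nbhd e x | s j != s x]|%:R.
Proof. by rewrite /cost sum_bdist. Qed.

Lemma cost_upd (s : state T) x a : cost e alpha b (upd s x a) x =
  alpha x * bdist R a (b x) + (1 - alpha x) * #|[set j in nbhd e x | s j != a]|%:R.
Proof.
rewrite /cost /upd ffunE eqxx.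
rewrite (eq_bigr (fun j => bdist R a (s j))) ?sum_bdist // => j.
rewrite inE ffunE => hj; case: eqP => // ej; by rewrite ej irr in hj.
Qed.

Definition le_state (s s' : state T) := forall j, s j -> s' j.

Lemma stable_mono s s' x : le_state s s' -> s x = true ->
  cost e alpha b (upd s x false) x - cost e alpha b s x <=
  cost e alpha b (upd s' x false) x - cost e alpha b s' x.
Proof.
move=> le sx; have s'x : s' x = true by apply: le; rewrite sx.
rewrite !cost_upd !cost_E sx s'x.
have c0 : 0 <= 1 - alpha x by case/andP: (alpha01 x) => _ h; rewrite subr_ge0 ltW.
have h1 : (#|[set j in nbhd e x | s j != false]| <= #|[set j in nbhd e x | s' j != false]|)%N.
  apply: subset_leq_card; apply/subsetP => j; rewrite !inE => /andP[-> h] /=.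
  by move: h; case: (s j) (le j) => // ->.
have h2 : (#|[set j in nbhd e x | s' j != true]| <= #|[set j in nbhd e x | s j != true]|)%N.
  apply: subset_leq_card; apply/subsetP => j; rewrite !inE => /andP[-> h] /=.
  by move: h; case: (s j) (le j) => // ->.
rewrite -(ler_nat R) in h1; rewrite -(ler_nat R) in h2.
set A := _%:R in h1; set A' := _%:R in h1; set B := _%:R in h2; set B' := _%:R in h2.
nra.
Qed.

Definition Inv (s : state T) := forall x, s x = true ->
  cost e alpha b s x <= cost e alpha b (upd s x false) x.

Lemma reach_eq n : forall s : state T, (#|[set x | ~~ s x]| <= n)%N -> Inv s ->
  exists s'', br_reach e alpha b s s'' /\ equilibrium e alpha b s'' /\ le_state s s''.
Proof.
elim: n => [|n IH] s hn hinv.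
- exists s; split; first exact: br_refl.
  split; last by [].
  move=> i; case si: (s i).
    by rewrite /=; move/(_ i si): hinv; rewrite leNgt => /negP.
  have h : (0 < #|[set x | ~~ s x]|)%N by apply/card_gt0P; exists i; rewrite inE si.
  by move: hn; rewrite leqNgt h.
- case: (pickP (fun x => ~~ s x && (cost e alpha b (upd s x true) x < cost e alpha b s x))).
  + move=> x /andP[sx hlt].
    set s' := upd s x true.
    have les : le_state s s'.
      by move=> j sj; rewrite /s' /upd ffunE; case: eqP.
    have hs : upd s' x false = s.
      apply/ffunP => j; rewrite /s' /upd !ffunE; case: eqP => // ->.
      by apply/esym/negbTE.
    have inv' : Inv s'.
      move=> y; rewrite /Inv; case: (y =P x) => [-> _|nyx s'y].
        by rewrite hs ltW.
      have sy : s y = true by move: s'y; rewrite /s' /upd ffunE; case: eqP.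
      have := @stable_mono s s' y les sy; have := hinv y sy; lra.
    have hn' : (#|[set x | ~~ s' x]| <= n)%N.
      rewrite -ltnS; apply: leq_trans hn; apply: proper_card.
      rewrite properE; apply/andP; split.
        by apply/subsetP => j; rewrite !inE; apply: contra; apply: les.
      apply/subsetPn; exists x; rewrite !inE //.
      by rewrite /s' /upd ffunE eqxx.
    have [s'' [h1 [h2 h3]]] := IH s' hn' inv'.
    exists s''; split; last split => //.
      apply: br_step h1; exists x; split => //.
      by rewrite (negbTE sx).
      by move=> j sj; apply: h3; apply: les.
  + move=> hnone; exists s; split; first exact: br_refl.
    split; last by [].
    move=> i; case si: (s i).
      by rewrite /=; move/(_ i si): hinv; rewrite leNgt => /negP.
    by move: (hnone i); rewrite si /= => ->.
Qed.
End Gen.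
Lemma num1 (R : realType) (a : R) (d : int) : 0 < a < 1 ->
  Num.floor (a / (1 - a)) + 1 <= d -> a < (1 - a) * d%:~R.
Proof.
move=> /andP[a0 a1] hd.
have c0 : 0 < 1 - a by rewrite subr_gt0.
have h1 := floorD1_gt (a / (1 - a)).
have h2 : (Num.floor (a / (1 - a)) + 1)%:~R <= d%:~R :> R by rewrite ler_int.
have h3 : a / (1 - a) < d%:~R := lt_le_trans h1 h2.
have h4 : (1-a)*(a/(1-a)) < (1-a)*d%:~R by rewrite ltr_pM2l.
by rewrite [X in X < _]mulrC mulfVK ?gt_eqF in h4.
Qed.

Lemma num2 (R : realType) (a : R) (d : int) : 0 < a < 1 ->
  - Num.floor (a / (1 - a)) <= d -> - a <= (1 - a) * d%:~R.
Proof.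
move=> /andP[a0 a1] hd.
have c0 : 0 < 1 - a by rewrite subr_gt0.
have h1 := floor_le (a / (1 - a)).
have h2 : (- d)%:~R <= (Num.floor (a / (1 - a)))%:~R :> R by rewrite ler_int lerNl.
have h3 : - d%:~R <= a / (1 - a) by rewrite -intrN; exact: le_trans h2 h1.
have h4 : (1 - a) * (- d%:~R) <= (1 - a) * (a / (1 - a)) by rewrite ler_pM2l.
by move: h4; rewrite mulrN [X in _ <= X]mulrC mulfVK ?gt_eqF // lerNl.
Qed.

Theorem lemma1 (R : realType) (T : finType) (e : rel T) (alpha : T -> R)
    (S : {set T}) (u : T) :
  simple_graph e ->
  odd #|T| ->
  (forall x, 0 < alpha x < 1) ->
  good_bisection e alpha S ->
  good_vertex e alpha S u ->
  exists b : state T, subvertable e alpha b /\ swing_vertex e alpha b u.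
Proof.
move=> [_ irr] _ a01 [bis [hdef _]] [uS hu].
set b : state T := [ffun x => (x \in S) && (x != u)].
set b' : state T := [ffun x => x \in S].
have hb' : upd b u true = b'.
  apply/ffunP => j; rewrite /upd /b /b' !ffunE; case: eqP => [->|_] //=.
  by rewrite andbT.
have bu : b u = false by rewrite /b ffunE eqxx andbF.
have WS x : #|[set j in nbhd e x | b' j != false]| = W e x S.
  by apply: eq_card => j; rewrite /W !inE /b' ffunE; case: (j \in S); rewrite ?andbT ?andbF.
have WC x : #|[set j in nbhd e x | b' j != true]| = W e x (~: S).
  by apply: eq_card => j; rewrite /W !inE /b' ffunE; case: (j \in S); rewrite ?andbT ?andbF.
have WSu : #|[set j in nbhd e u | b j != false]| = W e u S.
  apply: eq_card => j; rewrite /W !inE /b ffunE.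
  case: (boolP (e u j)) => euj //=.
  have nj : j != u by apply/eqP => ej; rewrite ej irr in euj.
  by rewrite nj andbT; case: (j \in S).
have WCu : #|[set j in nbhd e u | b j != true]| = W e u (~: S).
  apply: eq_card => j; rewrite /W !inE /b ffunE.
  case: (boolP (e u j)) => euj //=.
  have nj : j != u by apply/eqP => ej; rewrite ej irr in euj.
  by rewrite nj andbT; case: (j \in S).
have hdefE x : x \in S -> deficiency e S x = (W e x S)%:Z - (W e x (~: S))%:Z.
  by rewrite /deficiency => ->.
have key : (1 - alpha u) * (W e u (~: S))%:R + alpha u < (1 - alpha u) * (W e u S)%:R.
  have := @num1 R (alpha u) _ (a01 u) hu; rewrite hdefE // intrB !pmulrn.
  move=> h; lra.
have strict : cost e alpha b b' u < cost e alpha b b u.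
  rewrite -hb' cost_upd // cost_E // bu WSu WCu /bdist /=; lra.
have inv' : @Inv R T e alpha b b'.
  move=> x; rewrite /b' ffunE => xS; rewrite -/b'.
  case: (x =P u) => [->|nxu].
    rewrite cost_upd // cost_E // /b' ffunE uS -/b' bu WS WC /bdist /=; lra.
  have bx : b x = true by rewrite /b ffunE xS; apply/eqP.
  rewrite cost_upd // cost_E // /b' ffunE xS -/b' bx WS WC /bdist /=.
  have := @num2 R (alpha x) _ (a01 x) (hdef x xS); rewrite hdefE // intrB !pmulrn.
  move=> h; lra.
have [s'' [hr [heq hle]]] := @reach_eq R T e alpha b irr a01 #|T| b' (max_card _) inv'.
have hcard : (#|[set x | b x == false]|).*2 = #|T|.+1.
  have -> : [set x | b x == false] = u |: ~: S.
    apply/setP => j; rewrite !inE /b ffunE.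
    by case: (j =P u) => [->|/eqP nj]; rewrite ?uS ?andbT //; case: (j \in S).
  rewrite cardsU1 !inE uS /=.
  move: (cardsC S) bis; rewrite /bisection -!muln2 => h1 h2. rewrite -h1 in h2 *; lia.
have sub : subvertable e alpha b.
  split; first by rewrite /majority hcard.
  exists s''; split; first by apply: br_step hr; exists u; rewrite bu hb'.
  split => //.
  rewrite /majority.
  have hsub : (#|S| <= #|[set x | s'' x == true]|)%N.
    apply: subset_leq_card; apply/subsetP => x xS; rewrite inE; apply/eqP.
    by apply: hle; rewrite /b' ffunE.
  move: bis; rewrite /bisection => bis.
  have := hsub; rewrite -leq_double; move: bis; rewrite -!muln2 => h1 h2; lia.
exists b; split => //; split => //; split => //; split => //; split.
  by rewrite hb'.
move=> x bx; rewrite hb'; apply: inv'.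
by move: bx; rewrite /b /b' !ffunE => /andP[].
Qed.
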